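(* Let $\mathcal{S}\subset\mathbb{R}^n$ be compact convex, and let $f_1,\dots,f_T:\mathcal{S}\to\mathbb{R}$ be differentiable, $\ell$-strongly convex and $u$-smooth (i.e. $\nabla f_t$ is $u$-Lipschitz) with $\|\nabla f_t(x)\|\le G$ on $\mathcal{S}$. Let $\theta_1\in\mathcal{S}$ and $$\theta_{t+1}=\operatorname{argmin}_{\theta\in\mathcal{S}}\big\|\theta-(\theta_t-\eta_t\nabla f_t(\theta_t))\big\|^2,\qquad \eta_t=\frac{1-\gamma}{\ell(\gamma-\gamma^t)+u(1-\gamma)},$$ with $1-\gamma=1/T^\beta$, $\beta\in(0,1)$. Let $\theta_t^*=\operatorname{argmin}_{\theta\in\mathcal{S}}f_t(\theta)$ and $V^*=\sum_{t=2}^T\|\theta_t^*-\theta_{t-1}^*\|$. Then $$\sum_{t=1}^T\big(f_t(\theta_t)-f_t(\theta_t^* )\big)\le G\big(2(T^\beta-1)+u/\ell\big)\big(\|\theta_1-\theta_1^*\|+V^*\big).$$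
   Context: $\ell$-strongly convex: $f(y)\ge f(x)+\nabla f(x)^\top(y-x)+\frac\ell2\|x-y\|^2$ for all $x,y\in\mathcal{S}$. *)

(* Defs.v *)
From HB Require Import structures.
From mathcomp Require Import all_boot all_order all_algebra.
From mathcomp Require Import all_classical all_reals all_analysis.
Set Implicit Arguments. Unset Strict Implicit. Unset Printing Implicit Defensive.
Import Order.TTheory GRing.Theory Num.Theory.
Import numFieldNormedType.Exports.
Local Open Scope ring_scope.
Local Open Scope classical_set_scope.

Definition dotv (R : realType) (n : nat) (x y : 'rV[R]_n) : R :=
  \sum_(i < n) x ord0 i * y ord0 i.

Definition enorm (R : realType) (n : nat) (x : 'rV[R]_n) : R :=
  Num.sqrt (dotv x x).

Definition grad (R : realType) (n : nat) (f : 'rV[R]_n -> R) (x : 'rV[R]_n)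
  : 'rV[R]_n := \row_(i < n) ('D_(delta_mx ord0 i) f x : R).

Definition cvx_set (R : realType) (n : nat) (S : set 'rV[R]_n) : Prop :=
  forall x y, S x -> S y -> forall lam : R, 0 <= lam <= 1 ->
    S (lam *: x + (1 - lam) *: y).

Definition strongly_convex_on (R : realType) (n : nat) (l : R)
  (S : set 'rV[R]_n) (f : 'rV[R]_n -> R) : Prop :=
  forall x y, S x -> S y ->
    f y >= f x + dotv (grad f x) (y - x) + l / 2 * enorm (x - y) ^+ 2.

Definition smooth_on (R : realType) (n : nat) (u : R)
  (S : set 'rV[R]_n) (f : 'rV[R]_n -> R) : Prop :=
  forall x y, S x -> S y ->
    enorm (grad f x - grad f y) <= u * enorm (x - y).

Definition is_argmin (R : realType) (n : nat) (S : set 'rV[R]_n)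
  (g : 'rV[R]_n -> R) (x : 'rV[R]_n) : Prop :=
  S x /\ forall y, S y -> g x <= g y.

(* Main.v *)
Require Import Defs.
From HB Require Import structures.
From mathcomp Require Import all_boot all_order all_algebra.
From mathcomp Require Import all_classical all_reals all_analysis.
From mathcomp Require Import ring lra.
Import Order.TTheory GRing.Theory Num.Theory.
Import numFieldNormedType.Exports.
Local Open Scope ring_scope.
Local Open Scope classical_set_scope.
Set Implicit Arguments. Unset Strict Implicit.



Section Vec.
Variables (R : realType) (n : nat).
Implicit Types (x y z : 'rV[R]_n).

Lemma dotvC x y : dotv x y = dotv y x.
Proof. by rewrite /dotv; apply: eq_bigr => i _; rewrite mulrC. Qed.
Lemma dotvDl x y z : dotv (x + y) z = dotv x z + dotv y z.
Proof. by rewrite /dotv -big_split; apply: eq_bigr => i _; rewrite !mxE mulrDl. Qed.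
Lemma dotvDr x y z : dotv z (x + y) = dotv z x + dotv z y.
Proof. by rewrite dotvC dotvDl !(dotvC z). Qed.
Lemma dotvZl (c : R) x y : dotv (c *: x) y = c * dotv x y.
Proof. by rewrite /dotv mulr_sumr; apply: eq_bigr => i _; rewrite !mxE mulrA. Qed.
Lemma dotvZr (c : R) x y : dotv x (c *: y) = c * dotv x y.
Proof. by rewrite dotvC dotvZl dotvC. Qed.
Lemma dotvNl x y : dotv (- x) y = - dotv x y.
Proof. by rewrite -scaleN1r dotvZl mulN1r. Qed.
Lemma dotvNr x y : dotv x (- y) = - dotv x y.
Proof. by rewrite dotvC dotvNl dotvC. Qed.
Lemma dotvBl x y z : dotv (x - y) z = dotv x z - dotv y z.
Proof. by rewrite dotvDl dotvNl. Qed.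
Lemma dotvBr x y z : dotv z (x - y) = dotv z x - dotv z y.
Proof. by rewrite dotvDr dotvNr. Qed.
Lemma dotv0l x : dotv 0 x = 0.
Proof. by rewrite /dotv big1 // => i _; rewrite mxE mul0r. Qed.
Lemma dotv0r x : dotv x 0 = 0.
Proof. by rewrite dotvC dotv0l. Qed.
Lemma dotvv_ge0 x : 0 <= dotv x x.
Proof. by rewrite /dotv sumr_ge0 // => i _; rewrite -expr2 sqr_ge0. Qed.
Lemma dotvv_eq0 x : dotv x x = 0 -> x = 0.
Proof.
move=> H; apply/rowP => i; rewrite mxE.
have h := psumr_eq0P (P := predT) (F := fun j => x ord0 j * x ord0 j)
  (fun j _ => ltac:(simpl; rewrite -expr2; exact: sqr_ge0)) H.
have := h i erefl.
by move/eqP; rewrite mulf_eq0 orbb => /eqP.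
Qed.

Lemma enorm_ge0 x : 0 <= enorm x.
Proof. exact: sqrtr_ge0. Qed.
Lemma enorm_sq x : enorm x ^+ 2 = dotv x x.
Proof. by rewrite /enorm sqr_sqrtr // dotvv_ge0. Qed.
Lemma enorm_dot x : dotv x x = enorm x * enorm x.
Proof. by rewrite -expr2 enorm_sq. Qed.
Lemma enorm_eq0 x : enorm x = 0 -> x = 0.
Proof. by move=> h; apply: dotvv_eq0; rewrite enorm_dot h mulr0. Qed.
Lemma enorm0 : enorm (0 : 'rV[R]_n) = 0.
Proof. by rewrite /enorm dotv0l sqrtr0. Qed.

Lemma CS x y : dotv x y <= enorm x * enorm y.
Proof.
have [ha|ha] := eqVneq (enorm x) 0.
  by rewrite (enorm_eq0 ha) dotv0l enorm0 mul0r.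
have [hb|hb] := eqVneq (enorm y) 0.
  by rewrite (enorm_eq0 hb) dotv0r enorm0 mulr0.
have a0 : 0 < enorm x by rewrite lt_def ha enorm_ge0.
have b0 : 0 < enorm y by rewrite lt_def hb enorm_ge0.
have h := dotvv_ge0 (enorm y *: x - enorm x *: y).
rewrite !(dotvBl, dotvBr, dotvZl, dotvZr) !enorm_dot (dotvC y x) in h.
have hab : 0 < enorm x * enorm y by apply: mulr_gt0.
have : 0 <= (2 * (enorm x * enorm y)) * (enorm x * enorm y - dotv x y).
  move: h; set d := dotv x y; set a := enorm x; set b := enorm y => h.
  by apply: (le_trans h); rewrite le_eqVlt; apply/orP; left; apply/eqP; ring.
by rewrite pmulr_rge0 ?subr_ge0 // mulr_gt0.
Qed.

Lemma enormN x : enorm (- x) = enorm x.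
Proof. by rewrite /enorm dotvNl dotvNr opprK. Qed.
Lemma enormZ (c : R) x : enorm (c *: x) = `|c| * enorm x.
Proof.
by rewrite /enorm dotvZl dotvZr mulrA -expr2 sqrtrM ?sqr_ge0 // sqrtr_sqr.
Qed.
Lemma enormB x y : enorm (x - y) = enorm (y - x).
Proof. by rewrite -enormN opprB. Qed.

Lemma CSabs x y : `|dotv x y| <= enorm x * enorm y.
Proof.
rewrite ler_norml CS andbT; have := CS (- x) y; rewrite dotvNl enormN.
by rewrite lerNl.
Qed.
Lemma CSl x y : - (enorm x * enorm y) <= dotv x y.
Proof. by have := CSabs x y; rewrite ler_norml => /andP[]. Qed.

Lemma enorm_triangle x y : enorm (x + y) <= enorm x + enorm y.
Proof.
rewrite -(ler_pXn2r (n:=2)) // ?nnegrE ?addr_ge0 ?enorm_ge0 //.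
rewrite enorm_sq dotvDl !dotvDr !enorm_dot (dotvC y x).
have := CS x y; set d := dotv x y; set a := enorm x; set b := enorm y.
move=> h; rewrite sqrrD; lra.
Qed.
End Vec.



Section Lim.
Variable R : realType.

Lemma lim_eps (A B K : R) :
  (forall e, 0 < e -> e < 1 -> A <= B + e * K) -> A <= B.
Proof.
move=> h; rewrite leNgt; apply/negP => hAB.
have [hK|hK] := lerP K 0.
  have h1 : (0:R) < 1/2 by lra.
  have h2 : (1/2 : R) < 1 by lra.
  have := h (1/2) h1 h2.
  have : (1/2) * K <= 0 by rewrite pmulr_rle0.
  lra.
have hd : 0 < A - B by rewrite subr_gt0.
have hs : 0 < A - B + K by apply: addr_gt0.
have h1 : 0 < (A - B) / (A - B + K) by apply: divr_gt0.
have h2 : (A - B) / (A - B + K) < 1.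
  rewrite ltr_pdivrMr //; lra.
have := h _ h1 h2.
have : (A - B) / (A - B + K) * K < A - B.
  rewrite mulrAC ltr_pdivrMr //.
  rewrite -subr_gt0; have -> : (A - B) * (A - B + K) - (A - B) * K = (A-B)*(A-B) by ring.
  by rewrite mulr_gt0.
lra.
Qed.

Lemma lim_nat (A B K : R) :
  (forall N : nat, (0 < N)%N -> A <= B + K / N%:R) -> A <= B.
Proof.
move=> h; apply: (@lim_eps A B (`|K|)) => e e0 e1.
set N := (Num.truncn (e^-1)).+1.
have hN : e^-1 < N%:R by apply: truncnS_gt.
have N0 : (0 < N)%N by [].
apply: (le_trans (h N N0)); rewrite lerD2l.
have Nr0 : 0 < (N%:R : R) by rewrite ltr0n.
rewrite ler_pdivrMr //.
move: hN; rewrite -div1r ltr_pdivrMr // => hN.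
have := ler_norm K; have := normr_ge0 K.
set k := `|K|; set M := (N%:R : R) => *; nra.
Qed.
End Lim.



Section Cvx.
Variables (R : realType) (n : nat) (S : set 'rV[R]_n) (f : 'rV[R]_n -> R)
  (g : 'rV[R]_n -> 'rV[R]_n) (l u : R).
Hypotheses (hS : cvx_set S) (hl : 0 <= l)
  (hsc : forall x y, S x -> S y ->
     f x + dotv (g x) (y - x) + l / 2 * enorm (x - y) ^+ 2 <= f y)
  (hsm : forall x y, S x -> S y -> enorm (g x - g y) <= u * enorm (x - y)).

Lemma conv x y : S x -> S y -> f x + dotv (g x) (y - x) <= f y.
Proof.
move=> Sx Sy; have H := hsc Sx Sy; refine (le_trans _ H); rewrite lerDl.
by apply: mulr_ge0; [apply: divr_ge0 | apply: sqr_ge0].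
Qed.

Lemma seg_in x y (lam : R) : S x -> S y -> 0 <= lam <= 1 ->
  S (y + lam *: (x - y)).
Proof.
move=> Sx Sy hlam; have := hS Sx Sy hlam.
have -> : lam *: x + (1 - lam) *: y = y + lam *: (x - y).
  by apply/rowP => j; rewrite !mxE; ring.
done.
Qed.

Lemma u_ge0 x y : S x -> S y -> x != y -> 0 <= u.
Proof.
move=> Sx Sy hxy; have := hsm Sx Sy.
have h0 : 0 < enorm (x - y).
  rewrite lt_def enorm_ge0 andbT; apply/eqP => /enorm_eq0 /eqP.
  by rewrite subr_eq0 (negbTE hxy).
move=> h; have := le_trans (enorm_ge0 _) h.
by rewrite pmulr_lge0.
Qed.

Lemma descent y v : S y -> S (y - v) ->
  f (y - v) <= f y - dotv (g y) v + u / 2 * enorm v ^+ 2.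
Proof.
move=> Sy Syv.
have [->|v0] := eqVneq v 0.
  by rewrite subr0 dotv0r enorm0 expr0n /= mulr0 subr0 addr0.
have u0 : 0 <= u.
  apply: (u_ge0 Sy Syv); rewrite -subr_eq0 opprB addrC subrK //.
apply: (@lim_nat _ _ _ (u / 2 * enorm v ^+ 2)) => N N0.
have Nr0 : 0 < (N%:R : R) by rewrite ltr0n.
pose p (k : nat) := y - (k%:R / N%:R) *: v.
have Sp k : (k <= N)%N -> S (p k).
  move=> hk.
  have -> : p k = y + (k%:R / N%:R) *: ((y - v) - y).
    by apply/rowP => j; rewrite !mxE; ring.
  apply: seg_in => //; apply/andP; split.
    by apply: divr_ge0; apply: ler0n.
  by rewrite ler_pdivrMr // mul1r ler_nat.
have step k : (k < N)%N ->
  f (p k.+1) <= f (p k) - dotv (g y) v / N%:R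
                + u * ((k.+1)%:R / N%:R) * enorm v ^+ 2 / N%:R.
  move=> hk.
  have S1 := Sp _ hk; have S0 := Sp _ (ltnW hk).
  have hc := conv S1 S0.
  have e1 : p k - p k.+1 = N%:R^-1 *: v.
    by apply/rowP => j; rewrite !mxE -natr1; field; rewrite gt_eqF.
  rewrite e1 dotvZr in hc.
  have e2 : g (p k.+1) = g y + (g (p k.+1) - g y) by rewrite addrC subrK.
  rewrite e2 dotvDl in hc.
  have h3 := CSl (g (p k.+1) - g y) v.
  have h4 := hsm S1 Sy.
  have e3 : p k.+1 - y = - (((k.+1)%:R / N%:R) *: v).
    by apply/rowP => j; rewrite !mxE; ring.
  rewrite e3 enormN enormZ ger0_norm in h4; last first.
    by apply: divr_ge0; apply: ler0n.
  have h5 : enorm (g (p k.+1) - g y) * enorm v <=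
            u * ((k.+1)%:R / N%:R * enorm v) * enorm v.
    by apply: ler_wpM2r => //; apply: enorm_ge0.
  have hN : 0 < N%:R^-1 :> R by rewrite invr_gt0.
  move: hc h3 h5 hN.
  set a := dotv (g y) v; set b := dotv (g (p k.+1) - g y) v.
  set c := enorm (g (p k.+1) - g y); set w := enorm v; set q := (k.+1)%:R / N%:R.
  set Ni := N%:R^-1.
  move=> *; rewrite expr2; nra.
have claim m : (m <= N)%N -> f (p m) <= f y - (m%:R / N%:R) * dotv (g y) v
   + u * enorm v ^+ 2 * (m%:R * (m%:R + 1) / 2) / (N%:R ^+ 2).
  elim: m => [|m IH] hm.
    rewrite /p !mul0r scale0r subr0; lra.
  have := IH (ltnW hm); have := step m hm.
  rewrite -[(m.+1)%:R]natr1.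
  set a := dotv (g y) v; set M := (m%:R : R); set Nr := (N%:R : R).
  set fm := f (p m); set fm1 := f (p m.+1).
  have -> : f y - (M + 1) / Nr * a + u * enorm v ^+ 2 * ((M + 1) * (M + 1 + 1) / 2) / Nr ^+ 2
     = (f y - M / Nr * a + u * enorm v ^+ 2 * (M * (M + 1) / 2) / Nr ^+ 2)
       - a / Nr + u * ((M + 1) / Nr) * enorm v ^+ 2 / Nr.
    by field; rewrite gt_eqF.
  lra.
have := claim N (leqnn N).
have -> : p N = y - v by rewrite /p divff ?scale1r // gt_eqF.
set a := dotv (g y) v; set Nr := (N%:R : R).
have -> : f y - Nr / Nr * a + u * enorm v ^+ 2 * (Nr * (Nr + 1) / 2) / Nr ^+ 2
   = f y - a + u / 2 * enorm v ^+ 2 + u / 2 * enorm v ^+ 2 / Nr.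
  by field; rewrite gt_eqF.
done.
Qed.

Lemma Lloc y1 y2 t : S y1 -> S y2 -> S (y1 - t) -> S (y2 + t) ->
  2 * (dotv (g y1 - g y2) t - l * dotv (y1 - y2) t) - (u - l) * dotv t t
  <= dotv (g y1 - g y2) (y1 - y2) - l * dotv (y1 - y2) (y1 - y2).
Proof.
move=> S1 S2 S1t S2t.
have A1 := descent S1 S1t.
have A2 := hsc S2 S1t.
have S2t' : S (y2 - - t) by rewrite opprK.
have B1 := descent S2 S2t'.
rewrite opprK in B1.
have B2 := hsc S1 S2t.
set d := y1 - y2.
have e1 : y1 - t - y2 = d - t by rewrite /d; apply/rowP => j; rewrite !mxE; ring.
have e2 : y2 - (y1 - t) = - (d - t) by rewrite /d; apply/rowP => j; rewrite !mxE; ring.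
have e3 : y2 + t - y1 = - (d - t) by rewrite /d; apply/rowP => j; rewrite !mxE; ring.
have e4 : y1 - (y2 + t) = d - t by rewrite /d; apply/rowP => j; rewrite !mxE; ring.
rewrite e1 e2 enormN in A2; rewrite e3 e4 in B2.
rewrite enormN in B1.
rewrite !enorm_sq in A1 A2 B1 B2.
move: A1 A2 B1 B2.
rewrite !(dotvBl, dotvBr, dotvNl, dotvNr, dotvDl, dotvDr).
rewrite (dotvC t y1) (dotvC t y2) (dotvC y2 y1).
lra.
Qed.

Lemma LL (eta kap : R) y1 y2 a :
  0 < eta -> eta * (u + l) <= 2 -> 0 < kap ->
  kap * (2 * enorm a) = enorm (y1 - y2) ->
  S y1 -> S y2 ->
  S (y1 - ((1/2) *: (y1 - y2) - kap *: a)) ->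
  S (y2 + ((1/2) *: (y1 - y2) - kap *: a)) ->
  dotv (y1 - y2) a - eta * dotv (g y1 - g y2) a
    <= (1 - eta * l) * enorm (y1 - y2) * enorm a.
Proof.
move=> he heul hk hkap S1 S2 S1t S2t.
have H := Lloc S1 S2 S1t S2t.
move: hkap H; move: (y1 - y2) (g y1 - g y2) => d G hkap H.
rewrite !(dotvBl, dotvBr, dotvZl, dotvZr) (dotvC a d) in H.
have hX : kap * dotv d a <= dotv d d / 2.
  rewrite enorm_dot -hkap.
  have := CS d a; rewrite -hkap => h.
  have : kap * dotv d a <= kap * (kap * (2 * enorm a) * enorm a).
    by rewrite ler_pM2l.
  lra.
have haa : kap * (kap * dotv a a) = dotv d d / 4.
  by rewrite !enorm_dot -hkap; field.
have hH : 2 * (kap * dotv G a) >= 2 * l * (kap * dotv d a) - (u - l) * (dotv d d / 2 - kap * dotv d a).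
  move: H haa; set X := kap * dotv d a; set Y := kap * dotv G a.
  set Z := kap * (kap * dotv a a); move=> H haa.
  have e1 : kap * (1 / 2 * dotv a d) = X / 2 by rewrite /X dotvC; field.
  have hXd : X = kap * dotv d a by [].
  have hZd : Z = kap * (kap * dotv a a) by [].
  move: H hXd hZd haa; clearbody X Y Z; move=> H hXd hZd haa.
  have hm : (u - l) * (1 / 2 * (1 / 2 * dotv d d) - kap * (1 / 2 * dotv d a) -
    kap * (1 / 2 * dotv d a - kap * dotv a a)) = (u - l) * (dotv d d / 2 - X).
    have E : kap * (kap * dotv a a) = dotv d d / 4 by rewrite -hZd.
    rewrite hXd; apply/eqP; rewrite -subr_eq0; apply/eqP.
    transitivity ((u - l) * (kap * (kap * dotv a a) - dotv d d / 4)); first by field.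
    by rewrite E subrr mulr0.
  rewrite hm in H; lra.
rewrite -(ler_pM2l hk).
have h1 := ler_wpM2l (ltW he) hH.
have h2 : 0 <= (1 - eta * (u + l) / 2) * (dotv d d / 2 - kap * dotv d a).
  by apply: mulr_ge0; lra.
have h3 : kap * ((1 - eta * l) * enorm d * enorm a) = (1 - eta * l) * (dotv d d / 2).
  by rewrite enorm_dot -hkap; field.
rewrite h3; move: h1 h2; set X := kap * dotv d a; set Y := kap * dotv G a.
have -> : kap * (dotv d a - eta * dotv G a) = X - eta * Y by rewrite /X /Y; ring.
set Dd := dotv d d; move=> h1 h2; nra.
Qed.

Lemma tri x xs xp (al be : R) : S x -> S xs -> S xp -> 0 <= al -> 0 <= be ->
  al + be <= 1 -> S (xs + al *: (x - xs) + be *: (xp - xs)).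
Proof.
move=> Sx Sxs Sxp ha hb hab.
have [s0|s0] := eqVneq (al + be) 0.
  have a0 : al = 0 by lra.
  have b0 : be = 0 by lra.
  by rewrite a0 b0 !scale0r !addr0.
have sp : 0 < al + be by rewrite lt_def s0 addr_ge0.
have Sp : S (x + (be / (al + be)) *: (xp - x)).
  apply: seg_in => //; apply/andP; split; first by apply: divr_ge0 => //; apply: addr_ge0.
  rewrite ler_pdivrMr //; lra.
have := seg_in Sp Sxs (lam := al + be).
have -> : xs + (al + be) *: (x + (be / (al + be)) *: (xp - x) - xs)
   = xs + al *: (x - xs) + be *: (xp - xs).
  by apply/rowP => j; rewrite !mxE; field.
by apply; apply/andP; split; [apply: addr_ge0|].
Qed.

Lemma fin_arith (Da A E1 E2 rho del nd na eta nw1 nw2 : R) :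
  0 <= del -> 0 <= nd -> 0 <= na -> 0 <= eta ->
  (1 - del) * Da - eta * (A + E1 - E2) <= rho * (1 - del) * nd * na ->
  E1 <= u * (del * nw1) * na -> - (u * (del * nw2) * na) <= E2 ->
  Da - eta * A <= rho * nd * na
     + del * (`|Da| + `|rho| * nd * na + eta * u * (nw1 + nw2) * na).
Proof.
move=> d0 nd0 na0 e0 hc h1 h2.
have p1 : del * Da <= del * `|Da| by apply: ler_wpM2l => //; apply: ler_norm.
have p2 : - rho * (del * nd * na) <= `|rho| * (del * nd * na).
  apply: ler_wpM2r; first by apply: mulr_ge0 => //; apply: mulr_ge0.
  by rewrite -normrN ler_norm.
have p3 := ler_wpM2l e0 h1.
have p4 := ler_wpM2l e0 h2.
move: hc p1 p2 p3 p4; set a1 := `|Da|; set a2 := `|rho|; nra.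
Qed.

Lemma MCL' (eta : R) xs d a : 0 < eta -> eta * (u + l) <= 2 ->
  S (xs + d) -> S xs -> S (xs + a) -> 0 < enorm a -> 0 < enorm d ->
  dotv d a - eta * dotv (g (xs + d) - g xs) a
   <= (1 - eta * l) * enorm d * enorm a.
Proof.
move=> he heul Sx' Sxs Sxp' na0 nd0.
pose P (al be : R) := xs + al *: d + be *: a.
have SP al be : 0 <= al -> 0 <= be -> al + be <= 1 -> S (P al be).
  move=> h1 h2 h3; have := tri Sx' Sxs Sxp' h1 h2 h3.
  by rewrite /P !(addrC xs) !addrK.
set rho := 1 - eta * l.
set w1 := (1/3) *: a - (2/3) *: d.
set w2 := (1/3) *: (d + a).
apply: (@lim_eps _ _ _ (`|dotv d a| + `|rho| * enorm d * enorm a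
   + eta * u * (enorm w1 + enorm w2) * enorm a)) => del del0 del1.
set N := (Num.truncn (3 * enorm d / (2 * del * enorm a))).+1.
have hN : 3 * enorm d / (2 * del * enorm a) < N%:R by apply: truncnS_gt.
have Nr0 : 0 < (N%:R:R) by rewrite ltr0n.
set kap := (1 - del) * enorm d / (2 * N%:R * enorm a).
have kap0 : 0 < kap.
  by apply: divr_gt0; apply: mulr_gt0 => //; [lra | apply: mulr_gt0].
have kapd : kap <= del / 3.
  rewrite /kap ler_pdivrMr; last by apply: mulr_gt0 => //; apply: mulr_gt0.
  move: hN; rewrite ltr_pdivrMr; last by apply: mulr_gt0 => //; apply: mulr_gt0.
  move=> hN; nra.
pose z (k : nat) := P (del / 3 + k%:R / N%:R * (1 - del)) (del / 3).
have hkN k : (k <= N)%N -> k%:R / N%:R <= 1 :> R.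
  by move=> hk; rewrite ler_pdivrMr // mul1r ler_nat.
have hk0 k : 0 <= k%:R / N%:R :> R by apply: divr_ge0; apply: ler0n.
have Sz k : (k <= N)%N -> S (z k).
  move=> hk; have h1 := hkN k hk; have h2 := hk0 k.
  have m1 : 0 <= k%:R / N%:R * (1 - del) by apply: mulr_ge0 => //; lra.
  have m2 : 0 <= (1 - k%:R / N%:R) * (1 - del) by apply: mulr_ge0; lra.
  apply: SP; lra.
pose phi k := dotv (z k) a - eta * dotv (g (z k)) a.
have piece k : (k < N)%N ->
    phi k.+1 - phi k <= rho * ((1 - del) / N%:R * enorm d) * enorm a.
  move=> hk.
  have hdiff : z k.+1 - z k = ((1 - del) / N%:R) *: d.
    rewrite /z /P -natr1; apply/rowP => j; rewrite !mxE; field.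
    by rewrite gt_eqF.
  have hnd : enorm (z k.+1 - z k) = (1 - del) / N%:R * enorm d.
    by rewrite hdiff enormZ ger0_norm //; apply: divr_ge0 => //; lra.
  pose t : R := (2 * k%:R + 1) / (2 * N%:R).
  have ht0 : 0 <= t by apply: divr_ge0; [apply: addr_ge0 => //; apply: mulr_ge0|];
    rewrite ?ler0n //; lra.
  have ht1 : t <= 1.
    rewrite /t ler_pdivrMr ?mul1r; last by apply: mulr_gt0.
    have : (k.+1 <= N)%N := hk. rewrite -(ler_nat R) -natr1; lra.
  have e1 : z k.+1 - ((1/2) *: (z k.+1 - z k) - kap *: a)
         = P (del / 3 + t * (1 - del)) (del / 3 + kap).
    rewrite /z /P /t -natr1; apply/rowP => j; rewrite !mxE; field.
    by rewrite gt_eqF.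
  have e2 : z k + ((1/2) *: (z k.+1 - z k) - kap *: a)
         = P (del / 3 + t * (1 - del)) (del / 3 - kap).
    rewrite /z /P /t -natr1; apply/rowP => j; rewrite !mxE; field.
    by rewrite gt_eqF.
  have := @LL eta kap (z k.+1) (z k) a he heul kap0.
  rewrite hnd; move=> /(_ _ (Sz _ hk) (Sz _ (ltnW hk))).
  rewrite e1 e2 dotvBl /phi.
  have : kap * (2 * enorm a) = (1 - del) / N%:R * enorm d.
    by rewrite /kap; field; rewrite !gt_eqF.
  move=> hk1 /(_ hk1).
  have m1 : 0 <= t * (1 - del) by apply: mulr_ge0 => //; lra.
  have m2 : 0 <= (1 - t) * (1 - del) by apply: mulr_ge0; lra.
  have m3 : t * (1 - del) <= 1 - del.
    rewrite -subr_ge0; have -> : 1 - del - t * (1 - del) = (1 - t) * (1 - del) by ring.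
    done.
  move: m1 m3; set X := t * (1 - del) => m1 m3.
  have S1 : S (P (del / 3 + X) (del / 3 + kap)) by apply: SP; lra.
  have S2 : S (P (del / 3 + X) (del / 3 - kap)) by apply: SP; lra.
  move=> /(_ S1 S2); rewrite dotvBl -/rho mulrBr; lra.
set Q := rho * ((1 - del) / N%:R * enorm d) * enorm a.
have chain m : (m <= N)%N -> phi m - phi 0%N <= m%:R * Q.
  elim: m => [|m IH] hm; first by rewrite subrr mul0r.
  have := IH (ltnW hm); have := piece m hm.
  rewrite -/Q -natr1 [(_ + 1) * Q]mulrDl mul1r; lra.
have hc := chain N (leqnn N).
have eN : N%:R * Q = rho * (1 - del) * enorm d * enorm a.
  by rewrite /Q; field; rewrite gt_eqF.
rewrite eN /phi in hc.
have ez : z N - z 0%N = (1 - del) *: d.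
  rewrite /z /P; apply/rowP => j; rewrite !mxE; field; by rewrite gt_eqF.
have ezN : z N - (xs + d) = del *: w1.
  rewrite /z /P /w1; apply/rowP => j; rewrite !mxE; field; by rewrite gt_eqF.
have ez0 : z 0%N - xs = del *: w2.
  rewrite /z /P /w2; apply/rowP => j; rewrite !mxE; field; by rewrite gt_eqF.
have L1 := hsm (Sz N (leqnn N)) Sx'.
have L2 := hsm (Sz 0%N (leq0n N)) Sxs.
rewrite ezN enormZ ger0_norm in L1; last by lra.
rewrite ez0 enormZ ger0_norm in L2; last by lra.
have C1 := CS (g (z N) - g (xs + d)) a.
have C2 := CSl (g (z 0%N) - g xs) a.
have eg : g (z N) - g (z 0%N) = (g (xs + d) - g xs) + (g (z N) - g (xs + d))
            - (g (z 0%N) - g xs).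
  by apply/rowP => j; rewrite !mxE; ring.
have hc' : (1 - del) * dotv d a - eta * (dotv (g (xs + d) - g xs) a
    + dotv (g (z N) - g (xs + d)) a - dotv (g (z 0%N) - g xs) a)
    <= rho * (1 - del) * enorm d * enorm a.
  have Ea : dotv (z N) a - dotv (z 0%N) a = (1 - del) * dotv d a.
    by rewrite -dotvBl ez dotvZl.
  have Eb : dotv (g (z N)) a - dotv (g (z 0%N)) a =
     dotv (g (xs + d) - g xs) a + dotv (g (z N) - g (xs + d)) a
     - dotv (g (z 0%N) - g xs) a.
    by rewrite -dotvBl eg dotvBl dotvDl.
  move: hc Ea Eb.
  move: (dotv (z N) a) (dotv (z 0%N) a) (dotv (g (z N)) a) (dotv (g (z 0%N)) a).
  move=> p1 p2 p3 p4 hc Ea Eb.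
  rewrite -Ea -Eb; move: hc; clear; lra.
apply: (fin_arith _ _ _ _ hc').
- lra.
- exact: ltW.
- exact: ltW.
- exact: ltW.
- apply: (le_trans C1); apply: ler_wpM2r => //; exact: ltW.
- apply: (le_trans _ C2); rewrite lerN2; apply: ler_wpM2r => //; exact: ltW.
Qed.

Lemma MCL (eta : R) x xs xp : 0 < eta -> eta * (u + l) <= 2 ->
  S x -> S xs -> S xp ->
  dotv (x - xs) (xp - xs) - eta * dotv (g x - g xs) (xp - xs)
   <= (1 - eta * l) * enorm (x - xs) * enorm (xp - xs).
Proof.
move=> he heul Sx Sxs Sxp.
have [a0|a0] := eqVneq (enorm (xp - xs)) 0.
  by rewrite (enorm_eq0 a0) !dotv0r enorm0 !mulr0 subr0.
have [d0|d0] := eqVneq (enorm (x - xs)) 0.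
  have xe : x = xs by apply/eqP; rewrite -subr_eq0; apply/eqP; exact: enorm_eq0 d0.
  by rewrite xe !subrr !dotv0l enorm0 !(mulr0, mul0r) subrr.
have na0 : 0 < enorm (xp - xs) by rewrite lt_def a0 enorm_ge0.
have nd0 : 0 < enorm (x - xs) by rewrite lt_def d0 enorm_ge0.
have e1 : xs + (x - xs) = x by rewrite addrC subrK.
have e2 : xs + (xp - xs) = xp by rewrite addrC subrK.
have := @MCL' eta xs (x - xs) (xp - xs) he heul.
by rewrite e1 e2 => /(_ Sx Sxs Sxp na0 nd0).
Qed.

Lemma optim xs z : is_argmin S f xs -> S z -> 0 <= dotv (g xs) (z - xs).
Proof.
move=> [Sxs hmin] Sz.
rewrite -[0 <= _]lerN2 oppr0.
apply: (@lim_eps _ _ _ (u * enorm (z - xs) ^+ 2)) => lam l0 l1.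
rewrite add0r.
have Sy : S (xs + lam *: (z - xs)) by apply: seg_in => //; apply/andP; split; exact: ltW.
have h1 := hsc Sy Sxs.
have h2 := hmin _ Sy.
have e1 : xs - (xs + lam *: (z - xs)) = - (lam *: (z - xs)).
  by apply/rowP => j; rewrite !mxE; ring.
rewrite e1 dotvNr dotvZr in h1.
have h3 : 0 <= l / 2 * enorm (xs + lam *: (z - xs) - xs) ^+ 2.
  by apply: mulr_ge0; [apply: divr_ge0 | apply: sqr_ge0].
have h4 : 0 <= dotv (g (xs + lam *: (z - xs))) (z - xs).
  have : lam * dotv (g (xs + lam *: (z - xs))) (z - xs) >= 0.
    move: h1 h2 h3.
    move: (f _) (f xs) (lam * _) (l / 2 * _) => a b c d'; lra.
  by rewrite pmulr_rge0.
have h5 := hsm Sy Sxs.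
have e2 : xs + lam *: (z - xs) - xs = lam *: (z - xs).
  by apply/rowP => j; rewrite !mxE; ring.
rewrite e2 enormZ ger0_norm in h5; last exact: ltW.
have h6 := CS (g (xs + lam *: (z - xs)) - g xs) (z - xs).
rewrite dotvBl in h6.
have h7 : enorm (g (xs + lam *: (z - xs)) - g xs) * enorm (z - xs)
   <= u * (lam * enorm (z - xs)) * enorm (z - xs).
  by apply: ler_wpM2r => //; apply: enorm_ge0.
have -> : lam * (u * enorm (z - xs) ^+ 2) = u * (lam * enorm (z - xs)) * enorm (z - xs).
  by rewrite expr2; ring.
move: h4 h6 h7.
move: (dotv _ (z - xs)) (dotv (g xs) _) (enorm _ * _) (u * _ * _).
move=> a b c d'; lra.
Qed.

Lemma proj y xp z : is_argmin S (fun th => enorm (th - y) ^+ 2) xp -> S z ->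
  dotv (y - xp) (z - xp) <= 0.
Proof.
move=> [Sxp hmin] Sz.
apply: (@lim_eps _ _ _ (dotv (z - xp) (z - xp) / 2)) => lam l0 l1.
rewrite add0r.
have Sq : S (xp + lam *: (z - xp)) by apply: seg_in => //; apply/andP; split; exact: ltW.
have h := hmin _ Sq.
have e1 : xp + lam *: (z - xp) - y = (xp - y) + lam *: (z - xp).
  by apply/rowP => j; rewrite !mxE; ring.
have e2 : y - xp = - (xp - y) by rewrite opprB.
rewrite e1 !enorm_sq in h; rewrite e2.
move: h; move: (xp - y) (z - xp) => w e.
rewrite !(dotvDl, dotvDr, dotvZl, dotvZr, dotvNl) (dotvC e w).
move: (dotv w w) (dotv w e) (dotv e e) => A B C h.
have : lam * (2 * (- B) - lam * C) <= 0 by move: h; lra.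
rewrite pmulr_rle0 // => h'.
lra.
Qed.

Lemma contract eta x xs xp : 0 < eta -> eta * (u + l) <= 2 -> eta * l <= 1 ->
  S x -> is_argmin S f xs ->
  is_argmin S (fun th => enorm (th - (x - eta *: g x)) ^+ 2) xp ->
  enorm (xp - xs) <= (1 - eta * l) * enorm (x - xs).
Proof.
move=> he heul hel Sx hs hp.
have Sxs := hs.1; have Sxp := hp.1.
have h1 := proj hp Sxs.
have h2 := optim hs Sxp.
have h3 := MCL he heul Sx Sxs Sxp.
have e1 : x - eta *: g x - xp = (x - xs) - eta *: g x - (xp - xs).
  by apply/rowP => j; rewrite !mxE; ring.
have e2 : xs - xp = - (xp - xs) by rewrite opprB.
rewrite e1 e2 in h1.
have key : dotv (xp - xs) (xp - xs) <=
   dotv (x - xs) (xp - xs) - eta * dotv (g x - g xs) (xp - xs).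
  move: h1 h2; move: (x - xs) (xp - xs) => d a.
  rewrite !(dotvBl, dotvNr, dotvZl, dotvNl, dotvBr).
  move: (dotv d a) (dotv (g x) a) (dotv a a) (dotv (g xs) a) => A B C D h1 h2.
  have : 0 <= eta * D by apply: mulr_ge0 => //; exact: ltW.
  lra.
have h4 := le_trans key h3.
rewrite enorm_dot in h4.
have hr : 0 <= (1 - eta * l) * enorm (x - xs).
  by apply: mulr_ge0; [lra | apply: enorm_ge0].
have := enorm_ge0 (xp - xs).
move: h4 hr.
move: (enorm (xp - xs)) ((1 - eta * l) * enorm (x - xs)) => A M h4 hr hA.
nra.
Qed.
End Cvx.


Section Misc.
Variables (R : realType) (n : nat) (S : set 'rV[R]_n) (f : 'rV[R]_n -> R)
  (g : 'rV[R]_n -> 'rV[R]_n) (l u : R).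
Hypotheses (hl : 0 <= l)
  (hsc : forall x y, S x -> S y ->
     f x + dotv (g x) (y - x) + l / 2 * enorm (x - y) ^+ 2 <= f y)
  (hsm : forall x y, S x -> S y -> enorm (g x - g y) <= u * enorm (x - y)).

Lemma regret_term (G : R) x xs : S x -> S xs -> enorm (g x) <= G ->
  f x - f xs <= G * enorm (x - xs).
Proof.
move=> Sx Sxs hG.
have h := conv hl hsc Sx Sxs.
have h2 := CS (g x) (x - xs).
have e : xs - x = - (x - xs) by rewrite opprB.
rewrite e dotvNr in h.
have h3 : enorm (g x) * enorm (x - xs) <= G * enorm (x - xs).
  by apply: ler_wpM2r => //; apply: enorm_ge0.
move: h h2 h3; move: (f x) (f xs) (dotv _ _) (enorm _ * _) (G * _).
move=> a b c d e'; lra.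
Qed.

Lemma all_eq x y : u < l -> S x -> S y -> x = y.
Proof.
move=> hul Sx Sy.
have h1 := hsc Sx Sy; have h2 := hsc Sy Sx.
have h3 := CS (g x - g y) (x - y).
have h4 := hsm Sx Sy.
have h5 : enorm (g x - g y) * enorm (x - y) <= u * enorm (x - y) * enorm (x - y).
  by apply: ler_wpM2r => //; apply: enorm_ge0.
have e1 : y - x = - (x - y) by rewrite opprB.
have e2 : enorm (y - x) = enorm (x - y) by rewrite enormB.
rewrite e2 in h2.
rewrite dotvBl in h3.
rewrite e1 dotvNr in h1.
have hsq : 0 <= enorm (x - y) * enorm (x - y) by apply: mulr_ge0; apply: enorm_ge0.
have : (l - u) * (enorm (x - y) * enorm (x - y)) <= 0.
  move: h1 h2 h3 h5.
  move: (f x) (f y) (dotv (g x) _) (dotv (g y) _) (enorm (g x - g y)) (enorm (x - y)).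
  move=> a b c d k e'; nra.
rewrite pmulr_rle0 ?subr_gt0 // => h.
have : enorm (x - y) = 0.
  apply/eqP; rewrite -sqrf_eq0 expr2 eq_le h /=; exact: hsq.
by move/enorm_eq0/eqP; rewrite subr_eq0 => /eqP.
Qed.
End Misc.

Section Arith.
Variable R : realType.

Lemma eta_bounds (l u P : R) (t : nat) (e : R) : 0 < l -> l <= u -> 1 <= P -> (1 <= t)%N ->
  e = (1 - (1 - P^-1)) / (l * ((1 - P^-1) - (1 - P^-1) ^+ t) + u * (1 - (1 - P^-1))) ->
  [/\ 0 < e, e * (u + l) <= 2, e * l <= 1 & 1 / (2 * (P - 1) + u / l) <= e * l].
Proof.
move=> l0 lu P1 t1.
set gamma := 1 - P^-1 => ->.
set e' := (1 - gamma) / _.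
have P0 : 0 < P by lra.
have u0 : 0 < u by lra.
have q0 : 0 < P^-1 by rewrite invr_gt0.
have q1 : P^-1 <= 1 by rewrite invf_le1.
have eg : 1 - gamma = P^-1 by rewrite /gamma; ring.
have g0 : 0 <= gamma by rewrite /gamma subr_ge0.
have g1 : gamma <= 1 by rewrite /gamma; lra.
have gt0 : 0 <= gamma ^+ t by apply: exprn_ge0.
have gtg : gamma ^+ t <= gamma.
  clear gt0; case: t t1 {e'} => // t _; rewrite exprS.
  by rewrite -[X in _ <= X]mulr1; apply: ler_wpM2l => //; apply: exprn_ile1.
set D := l * (gamma - gamma ^+ t) + u * (1 - gamma).
have Dlo : u * P^-1 <= D.
  rewrite /D eg lerDr; apply: mulr_ge0; lra.
have Dhi : D <= l * (1 - P^-1) + u * P^-1.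
  rewrite /D eg lerD2r; apply: ler_wpM2l; [lra | move: gt0; rewrite /gamma; lra].
have D0 : 0 < D by apply: (lt_le_trans _ Dlo); apply: mulr_gt0.
have ee : e' = P^-1 / D.
  by rewrite /e' -/D eg.
have e0 : 0 < e' by rewrite ee; apply: divr_gt0.
have eu : e' * u <= 1.
  by rewrite ee mulrAC ler_pdivrMr // mul1r mulrC.
have el : e' * l <= e' * u by rewrite ler_pM2l.
split => //; first by rewrite mulrDr; lra.
  lra.
have C0 : 0 < 2 * (P - 1) + u / l.
  by apply: ltr_wpDl; [apply: mulr_ge0; lra | apply: divr_gt0].
rewrite ler_pdivrMr //.
have E : e' * l * (2 * (P - 1) + u / l) = (2 * l * (1 - P^-1) + u * P^-1) / D.
  by rewrite ee; field; rewrite !gt_eqF.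
rewrite E ler_pdivlMr // mul1r.
have : 0 <= l * (1 - P^-1) by apply: mulr_ge0; lra.
lra.
Qed.

Lemma sum_rec (r v : nat -> R) (C : R) (T : nat) : 1 <= C -> (1 <= T)%N ->
  (forall t, 0 <= r t) ->
  (forall t, (1 <= t < T)%N -> r t.+1 <= (1 - 1/C) * r t + v t.+1) ->
  \sum_(1 <= t < T.+1) r t <= C * (r 1%N + \sum_(2 <= t < T.+1) v t).
Proof.
move=> C1 T1 r0 hrec.
have I m : (1 <= m <= T)%N -> \sum_(1 <= t < m.+1) r t + (C - 1) * r m
      <= C * (r 1%N + \sum_(2 <= t < m.+1) v t).
  elim: m => // m IH /andP[_ hm].
  have [m0|m0] := eqVneq m 0%N.
    subst m; rewrite big_nat1 big_geq // addr0.
    by rewrite le_eqVlt; apply/orP; left; apply/eqP; ring.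
  have hm1 : (1 <= m)%N by rewrite lt0n.
  have := IH (introT andP (conj hm1 (ltnW hm))).
  have := hrec m (introT andP (conj hm1 hm)).
  have eR : \sum_(1 <= t < m.+2) r t = \sum_(1 <= t < m.+1) r t + r m.+1.
    by rewrite big_nat_recr.
  have eV : \sum_(2 <= t < m.+2) v t = \sum_(2 <= t < m.+1) v t + v m.+1.
    by rewrite big_nat_recr.
  rewrite eR eV.
  have hC : C * ((1 - 1 / C) * r m + v m.+1) = (C - 1) * r m + C * v m.+1.
    by field; rewrite gt_eqF //; lra.
  move=> h1 h2; have h3 := ler_wpM2l (ltW (lt_le_trans ltr01 C1)) h1.
  rewrite hC in h3.
  move: h2 h3; move: (\sum_(1 <= i < m.+1) r i) (\sum_(2 <= i < m.+1) v i).
  move=> a b h2 h3; rewrite mulrDr mulrDr; rewrite mulrDr in h2.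
  move: (r m) (r m.+1) (v m.+1) (r 1%N) h2 h3 => x y z w h2 h3.
  have -> : a + y + (C - 1) * y = a + C * y by ring.
  nra.
have := I T (introT andP (conj T1 (leqnn T))).
have : 0 <= (C - 1) * r T by apply: mulr_ge0 => //; lra.
move: (\sum_(1 <= t < T.+1) r t) ((C - 1) * r T) => a b; lra.
Qed.
End Arith.

Unset Implicit Arguments. Set Strict Implicit.

Theorem theorem3p4 (R : realType) (n T : nat) (S : set 'rV[R]_n)
  (f : nat -> 'rV[R]_n -> R) (l u G beta : R)
  (theta thstar : nat -> 'rV[R]_n) :
  (1 <= T)%N ->
  compact S -> cvx_set S ->
  0 < l -> 0 < u ->
  0 < beta < 1 ->
  (forall t, (1 <= t <= T)%N ->
     (forall x, S x -> differentiable (f t) x) /\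
     strongly_convex_on l S (f t) /\
     smooth_on u S (f t) /\
     (forall x, S x -> enorm (grad (f t) x) <= G)) ->
  let gamma := 1 - (T%:R `^ beta)^-1 in
  let eta := fun t : nat =>
    (1 - gamma) / (l * (gamma - gamma ^+ t) + u * (1 - gamma)) in
  S (theta 1%N) ->
  (forall t, (1 <= t < T)%N ->
     is_argmin S
       (fun th => enorm (th - (theta t - eta t *: grad (f t) (theta t))) ^+ 2)
       (theta t.+1)) ->
  (forall t, (1 <= t <= T)%N -> is_argmin S (f t) (thstar t)) ->
  let Vstar := \sum_(2 <= t < T.+1) enorm (thstar t - thstar t.-1) in
  \sum_(1 <= t < T.+1) (f t (theta t) - f t (thstar t))
    <= G * (2 * (T%:R `^ beta - 1) + u / l)
         * (enorm (theta 1%N - thstar 1%N) + Vstar).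
Proof.
move=> T1 cS cvxS l0 u0 hb hf gamma eta Sth1 hth hst.
cbv zeta.
have P1 : 1 <= T%:R `^ beta.
  have b0 : (0:R) <= beta by move: hb => /andP[/ltW].
  have T1r : (1:R) <= T%:R by rewrite ler1n.
  have := @ler_powR R (T%:R) T1r 0 beta b0.
  by rewrite powRr0.
set P := T%:R `^ beta in P1.
have hl : 0 <= l := ltW l0.
have Sth t : (1 <= t <= T)%N -> S (theta t).
  elim: t => // t IH /andP[_ ht].
  have [t0|t0] := eqVneq t 0%N; first by subst t.
  have t1 : (1 <= t)%N by rewrite lt0n.
  exact: (hth t (introT andP (conj t1 ht))).1.
have Sst t : (1 <= t <= T)%N -> S (thstar t) by move=> h; exact: (hst t h).1.
have T1' : (1 <= 1 <= T)%N by rewrite leqnn T1.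
have G0 : 0 <= G.
  have [_ [_ [_ hG]]] := hf 1%N T1'.
  exact: le_trans (enorm_ge0 _) (hG _ Sth1).
have hC0 : 0 <= 2 * (P - 1) + u / l.
  by apply: addr_ge0; [apply: mulr_ge0; lra | apply: divr_ge0; apply: ltW].
have V0 : 0 <= \sum_(2 <= t < T.+1) enorm (thstar t - thstar t.-1).
  by apply: sumr_ge0 => i _; apply: enorm_ge0.
have [lu|ul] := lerP l u; last first.
  apply: (@le_trans _ _ (\sum_(1 <= t < T.+1) (0:R))).
    apply: ler_sum_nat => t ht.
    have [_ [hsc [hsm _]]] := hf t ht.
    by rewrite (all_eq hsc hsm ul (Sth t ht) (Sst t ht)) subrr.
  rewrite big1_eq.
  apply: mulr_ge0; first by apply: mulr_ge0.
  by apply: addr_ge0 => //; apply: enorm_ge0.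
set C := 2 * (P - 1) + u / l.
have C1 : 1 <= C.
  have : 1 <= u / l by rewrite ler_pdivlMr // mul1r.
  have : 0 <= 2 * (P - 1) by apply: mulr_ge0; lra.
  rewrite /C; lra.
pose r t := enorm (theta t - thstar t).
pose v t := enorm (thstar t - thstar t.-1).
have r0 t : 0 <= r t by apply: enorm_ge0.
have rec t : (1 <= t < T)%N -> r t.+1 <= (1 - 1/C) * r t + v t.+1.
  move=> /andP[t1 tT].
  have htT : (1 <= t <= T)%N by rewrite t1 ltnW.
  have ht1T : (1 <= t.+1 <= T)%N by rewrite tT.
  have [e0 eul el eC] := eta_bounds (e := eta t) l0 lu P1 t1 erefl.
  have [_ [hsc [hsm _]]] := hf t htT.
  have hc := contract cvxS hl hsc hsm e0 eul el (Sth t htT) (hst t htT)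
               (hth t (introT andP (conj t1 tT))).
  have tri : r t.+1 <= enorm (theta t.+1 - thstar t) + v t.+1.
    rewrite /r /v /=.
    have -> : theta t.+1 - thstar t.+1 = (theta t.+1 - thstar t) + (thstar t - thstar t.+1).
      by rewrite addrA subrK.
    rewrite [enorm (thstar t.+1 - _)]enormB; apply: enorm_triangle.
  have h2 : (1 - eta t * l) * r t <= (1 - 1 / C) * r t.
    by apply: ler_wpM2r => //; rewrite lerD2l lerN2.
  rewrite -/(r t) in hc.
  move: tri hc h2; move: (r t.+1) (enorm (theta t.+1 - thstar t)) (v t.+1).
  move: ((1 - eta t * l) * r t) ((1 - 1 / C) * r t) => a b c d e'; lra.
have hsum := sum_rec C1 T1 r0 rec.
apply: (@le_trans _ _ (\sum_(1 <= t < T.+1) G * r t)).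
  apply: ler_sum_nat => t ht.
  have [_ [hsc [hsm hG]]] := hf t ht.
  have := regret_term hl hsc (Sth t ht) (Sst t ht) (hG _ (Sth t ht)).
  by [].
rewrite big_nat -mulr_sumr -big_nat -mulrA; apply: ler_wpM2l => //.
Qed.
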